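(* For every $n\ge 1$, the burning number of the directed cycle $C_n$ on $n$ nodes is $\left\lceil \sqrt{2n+\tfrac14}-\tfrac12\right\rceil$.
   Context: Burning process on a digraph $D$: a sequence $(x_1,\ldots,x_b)$ of nodes is a burning sequence for $D$ if after $b$ steps of the following process every node of $D$ is burned; the $i$-th step consists of first burning all out-neighbours of all currently burned nodes, and then burning the node $x_i$. The burning number of $D$ is the length of a shortest burning sequence. Equivalently, with $N^+_k(v)$ the set of nodes reachable from $v$ by a directed path with at most $k$ arcs, the burning number is the least $b$ such that there are nodes $v_1,\ldots,v_b$ with $V(D)=\bigcup_{i=1}^b N^+_{i-1}(v_i)$. *)

(* Defs.v *)
From mathcomp Require Import all_boot all_order all_algebra.
From mathcomp Require Import reals.
Set Implicit Arguments. Unset Strict Implicit. Unset Printing Implicit Defensive.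

(* A digraph is a finite type of nodes with an arc relation [arc : rel T]
   (arc u v means there is an arc u -> v). *)

Fixpoint reach (T : finType) (arc : rel T) (k : nat) (v w : T) : bool :=
  if k is k'.+1 then (v == w) || [exists u, arc v u && reach arc k' u w]
  else v == w.

(* s = [:: v_1; ...; v_b] is a burning sequence: V(D) = \bigcup_i N^+_{i-1}(v_i)
   (0-based index i in s covers N^+_i). *)
Definition burning_seq (T : finType) (arc : rel T) (s : seq T) : Prop :=
  forall w : T, exists2 i, i < size s & reach arc i (nth w s i) w.

Definition is_burning_number (T : finType) (arc : rel T) (b : nat) : Prop :=
  (exists2 s : seq T, size s = b & burning_seq arc s) /\
  (forall s : seq T, burning_seq arc s -> b <= size s).

Definition dcycle_arc (n : nat) : rel 'I_n :=
  fun i j => nat_of_ord j == (i.+1 %% n).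

(* Main.v *)
Require Import Defs.
From mathcomp Require Import all_boot all_order all_algebra.
From mathcomp Require Import reals.
From mathcomp Require Import zify ring lra.
Import Order.TTheory GRing.Theory Num.Theory.

Fixpoint tri (m : nat) : nat := if m is m'.+1 then tri m' + m'.+1 else 0.

Lemma tri2 m : (tri m * 2 = m * m.+1)%N.
Proof. elim: m => //= m IH. rewrite mulnDl IH. lia. Qed.

Lemma tri_mono a b : (a <= b)%N -> (tri a <= tri b)%N.
Proof. elim: b => [|b IH]; first by rewrite leqn0 => /eqP ->.
rewrite leq_eqVlt => /orP [/eqP -> //| ]; rewrite ltnS => /IH /= H. lia. Qed.

Section Cyc.
Variable m : nat.
Notation n := m.+1.

Lemma reach_mod k (v w : 'I_n) : reach (@dcycle_arc n) k v w ->
  exists2 d, (d <= k)%N & nat_of_ord w = (nat_of_ord v + d) %% n.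
Proof.
elim: k v => [|k IH] v /=.
  by move/eqP => ->; exists 0%N => //; rewrite addn0 modn_small.
case/orP => [/eqP -> | /existsP [u /andP [Hu /IH [d Hd Hw]]]].
  by exists 0%N => //; rewrite addn0 modn_small.
exists d.+1; first by [].
move: Hu; rewrite /dcycle_arc => /eqP Hu.
by rewrite Hw Hu modnDml addSnnS.
Qed.

Lemma mod_reach k d (v w : 'I_n) : (d <= k)%N -> nat_of_ord w = (nat_of_ord v + d) %% n ->
  reach (@dcycle_arc n) k v w.
Proof.
elim: k v d => [|k IH] v d /=.
  rewrite leqn0 => /eqP -> ; rewrite addn0 modn_small // => H.
  by apply/eqP/val_inj.
case: d => [|d] Hd Hw.
  apply/orP; left; apply/eqP; apply: val_inj => /=. by rewrite Hw addn0 modn_small.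
apply/orP; right; apply/existsP.
exists (Ordinal (ltn_pmod (val v).+1 (ltn0Sn m))).
apply/andP; split; first by rewrite /dcycle_arc.
apply: (IH _ d) => //=.
by rewrite Hw modnDml addSnnS.
Qed.

Fixpoint cover (s : seq nat) (i : nat) : seq nat :=
  if i is i'.+1 then cover s i' ++ [seq (nth 0 s i' + d) %% n | d <- iota 0 i'.+1]
  else [::].

Lemma size_cover s i : size (cover s i) = tri i.
Proof. elim: i => // i IH. change (size (cover s i ++ [seq (nth 0 s i + d) %% n | d <- iota 0 i.+1]) = tri i + i.+1). by rewrite size_cat IH size_map size_iota. Qed.

Lemma in_cover s i j d : (j < i)%N -> (d <= j)%N ->
  (nth 0 s j + d) %% n \in cover s i.
Proof.
elim: i => // i IH; rewrite ltnS leq_eqVlt => /orP [/eqP -> | Hj] Hd;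
  rewrite -[cover s i.+1]/(cover s i ++ _) mem_cat; apply/orP; [right | left; exact: IH].
apply/mapP; exists d => //; rewrite mem_iota; lia.
Qed.

Lemma lower (s : seq 'I_n) : burning_seq (@dcycle_arc n) s -> (n <= tri (size s))%N.
Proof.
move=> Hb.
rewrite -[X in (X <= _)%N](size_iota 0 n).
rewrite -(size_cover (map val s)).
apply: uniq_leq_size; first exact: iota_uniq.
move=> x; rewrite mem_iota add0n => /= Hx.
have [i Hi Hr] := Hb (Ordinal Hx).
have [d Hd Hw] := reach_mod _ _ _ Hr.
have -> : x = (nth 0 (map val s) i + d) %% n.
  by rewrite (nth_map (Ordinal Hx)) // -Hw.
exact: in_cover.
Qed.

Lemma find_tri b w : (w < tri b)%N -> exists2 i, (i < b)%N & (tri i <= w < tri i.+1)%N.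
Proof.
elim: b => // b IH /= Hw.
case: (ltnP w (tri b)) => H; first by case: (IH H) => i Hi Hi2; exists i => //; lia.
exists b => //=; lia.
Qed.

Lemma upper b : (n <= tri b)%N -> exists2 s : seq 'I_n, size s = b & burning_seq (@dcycle_arc n) s.
Proof.
move=> Hb.
exists [seq inord (tri i %% n) | i <- iota 0 b]; first by rewrite size_map size_iota.
move=> w.
have [i Hi /andP [H1 H2]] : exists2 i, (i < b)%N & (tri i <= w < tri i.+1)%N.
  apply: find_tri; have := ltn_ord w; lia.
exists i; first by rewrite size_map size_iota.
rewrite (nth_map 0%N); last by rewrite size_iota.
rewrite nth_iota // add0n.
apply: (mod_reach _ (w - tri i)%N).
  move: H2 => /=; lia.
rewrite inordK; last by rewrite ltnS -ltnS ltn_pmod.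
rewrite modnDml subnKC // modn_small //.
Qed.

Definition P b := (n <= tri b)%N /\ forall b', (n <= tri b')%N -> (b <= b')%N.

Lemma burnP b : is_burning_number (@dcycle_arc n) b <-> P b.
Proof.
split.
  case=> [[s Hs Hb] Hmin]; split; first by rewrite -Hs; exact: lower.
  by move=> b' /upper [s' <- /Hmin].
case=> H1 H2; split; first exact: upper.
by move=> s /lower /H2.
Qed.

End Cyc.

Local Open Scope ring_scope.

Lemma keyR (R : realType) m b :
  (Num.sqrt (2 * m.+1%:R + 1 / 4 : R) - 1 / 2 <= b%:R) = (m.+1 <= tri b)%N.
Proof.
have h2 : (tri b)%:R * 2 = b%:R * (b%:R + 1) :> R.
  by rewrite -natrM tri2 -addn1 natrM natrD.
rewrite lerBlDr -[b%:R + _](@ger0_norm R); last by rewrite addr_ge0 ?ler0n ?divr_ge0 ?ler0n.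
rewrite -sqrtr_sqr ler_sqrt; last by rewrite sqr_ge0.
have -> : (b%:R + 1/2 : R) ^+ 2 = 2 * (tri b)%:R + 1/4.
  rewrite -[2 * _]mulrC h2 expr2; field.
1: done. rewrite lerD2r ler_pM2l // ler_nat //.
Qed.

Theorem mainTheorem6 (R : realType) (n : nat) (b : nat) :
  (1 <= n)%N ->
  (is_burning_number (@dcycle_arc n) b <->
   b%:Z = Num.ceil (Num.sqrt (2 * n%:R + 1 / 4 : R) - 1 / 2)).
Proof.
case: n => [//|m] _.
rewrite burnP.
set x := (Num.sqrt _ - _).
have Hx : -1 < x by rewrite /x; have := sqrtr_ge0 (2 * m.+1%:R + 1 / 4 : R); lra.
split.
  case=> H1 H2; apply/esym/eqP; rewrite ceil_eq; apply/andP; split; last first.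
    by rewrite /x -[(b%:Z)%:~R]/(b%:R : R) keyR.
  case: b H1 H2 => [|b'] H1 H2; first by [].
  have -> : (b'.+1%:Z - 1) = b'%:Z by rewrite -addn1 PoszD addrK.
  rewrite -[(b'%:Z)%:~R]/(b'%:R : R) ltNge /x keyR.
  apply/negP => /H2; rewrite ltnn //.
move=> Hb; split.
  by rewrite -(keyR R) -/x -[(b%:R : R)]/((b%:Z)%:~R) Hb ceil_ge.
move=> b' /=; rewrite -(keyR R) -/x -[(b'%:R : R)]/((b'%:Z)%:~R) -ceil_le_int -Hb.
by rewrite lez_nat.
Qed.
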